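(* Every element of ${\rm BrM}({\rm G}_2)$ can be written in one of the following forms: (i) $\delta^k u e_i v w$ with $i\in\{0,1\}$, $u\in D_i$, $v\in K_i$, $w\in D_i^{\rm op}$ and $k\in\mathbb{Z}$; or (ii) $\delta^k a$ with $a\in W({\rm G}_2)$ and $k\in\mathbb{Z}$. In particular, ${\rm Br}({\rm G}_2)$ is spanned over $\mathbb{Z}[\delta^{\pm1}]$ by $39$ elements.
   Context: Let $\delta$ be an indeterminate. ${\rm Br}({\rm G}_2)$ is the $\mathbb{Z}[\delta^{\pm1}]$-algebra generated by $r_0,r_1,e_0,e_1$ subject to the following relations: - $r_0^2=r_1^2=1$; - $r_ie_i=e_ir_i=e_i$ for $i=0,1$; - $e_0^2=\delta^3e_0$ and $e_1^2=\delta e_1$; - $r_0e_1e_0=r_1e_0$ and $e_0e_1r_0=e_0r_1$; - $e_1r_0e_1r_0e_1=e_1$ and $e_1r_0e_1r_0r_1=e_1r_0r_1r_0$; - $e_0r_1e_0=\delta^2e_0$; - $r_1r_0e_1r_0e_1=r_0r_1r_0e_1$; - $(r_1r_0)^6=1$. ${\rm BrM}({\rm G}_2)$ is the submonoid of the multiplicative monoid of ${\rm Br}({\rm G}_2)$ generated by $\delta,\delta^{-1},r_0,r_1,e_0,e_1$. Let $\Psi$ be a root system of type ${\rm G}_2$ with simple roots $\beta_0$ (short) and $\beta_1$ (long), and positive roots $\Psi^+$. $W({\rm G}_2)$ is generated by the reflections $s_0,s_1$ in $\beta_0,\beta_1$. It acts on $\Psi^+$ by $w\cdot\beta=$ the unique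 element of $\Psi^+\cap\{\pm w\beta\}$. The subgroup of units generated by $r_0,r_1$ is isomorphic to $W({\rm G}_2)$ via $r_i\mapsto s_i$, and elements of $W({\rm G}_2)$ are identified with their images. For $i\in\{0,1\}$: - $N_i$ is the stabilizer of $\beta_i$ in $W({\rm G}_2)$ under this action; - $D_i$ is a set of left coset representatives for $N_i$ in $W({\rm G}_2)$; - $K_0=\{1\}$, and $K_1$ is the subgroup generated by $r_0r_1r_0r_1r_0$; - $D_i^{\rm op}=\{d^{\rm op}\mid d\in D_i\}$, where ${\rm op}$ is the anti-involution of ${\rm Br}({\rm G}_2)$ fixing $\delta,r_0,r_1,e_0,e_1$ (so $d^{\rm op}=d^{-1}$ for $d\in W({\rm G}_2)$). *)

(* Defs.v *)
From HB Require Import structures.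
From mathcomp Require Import all_boot all_order all_algebra.
Set Implicit Arguments. Unset Strict Implicit. Unset Printing Implicit Defensive.
Import Order.TTheory GRing.Theory Num.Theory.
Local Open Scope ring_scope.

(* A vector a*beta_0 + b*beta_1 of the root lattice is the pair (a, b).
   beta_0 is short, beta_1 is long; Cartan integers
   <beta_1, beta_0^v> = -3, <beta_0, beta_1^v> = -1. *)
Definition rvec := (int * int)%type.

(* index convention: false <-> 0, true <-> 1 *)
Definition beta (i : bool) : rvec := if i then (0, 1) else (1, 0).

Definition sref (i : bool) (v : rvec) : rvec :=
  if i then (v.1, v.1 - v.2)          (* s_1 (v) = v - <v, beta_1^v> beta_1 *)
  else (- v.1 + 3 * v.2, v.2).        (* s_0 (v) = v - <v, beta_0^v> beta_0 *)

(* A word w = [:: i1; ...; in] represents s_{i1} ... s_{in} in W(G2). *)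
Definition word := seq bool.

Definition wact (w : word) (v : rvec) : rvec := foldr sref v w.

(* equality in W(G2) (the reflection representation is faithful) *)
Definition weq (w w' : word) : Prop :=
  wact w (beta false) = wact w' (beta false) /\
  wact w (beta true) = wact w' (beta true).

Definition wopp (v : rvec) : rvec := (- v.1, - v.2).

(* N_i : stabilizer of beta_i for the action w . beta = (Psi^+ \cap {+-w beta}) *)
Definition inN (i : bool) (w : word) : Prop :=
  wact w (beta i) = beta i \/ wact w (beta i) = wopp (beta i).

(* D is a set of left coset representatives of N_i in W(G2):
   every left coset x N_i contains an element of D, and distinct elements of
   D lie in distinct cosets.  (The inverse of a word is its reverse.) *)
Definition left_coset_reps (i : bool) (D : seq word) : Prop :=
  (forall x : word, exists2 u, u \in D & inN i (rev u ++ x)) /\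
  (forall u u', u \in D -> u' \in D -> inN i (rev u ++ u') -> weq u u').

Definition kgen : word := [:: false; true; false; true; false].
Definition inK (i : bool) (v : word) : Prop :=
  if i then exists n : nat, weq v (flatten (nseq n kgen)) else weq v [::].

Section Ring.
Variable R : unitRingType.

Definition wimg (r0 r1 : R) (w : word) : R :=
  \prod_(b <- w) (if b then r1 else r0).

Inductive inBrM (d r0 r1 e0 e1 : R) : R -> Prop :=
  | BrM1 : inBrM d r0 r1 e0 e1 1
  | BrMd : inBrM d r0 r1 e0 e1 d
  | BrMdi : inBrM d r0 r1 e0 e1 d^-1
  | BrMr0 : inBrM d r0 r1 e0 e1 r0
  | BrMr1 : inBrM d r0 r1 e0 e1 r1
  | BrMe0 : inBrM d r0 r1 e0 e1 e0
  | BrMe1 : inBrM d r0 r1 e0 e1 e1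
  | BrMmul x y : inBrM d r0 r1 e0 e1 x -> inBrM d r0 r1 e0 e1 y ->
                 inBrM d r0 r1 e0 e1 (x * y).

Inductive inBr (d r0 r1 e0 e1 : R) : R -> Prop :=
  | Br1 : inBr d r0 r1 e0 e1 1
  | Brd : inBr d r0 r1 e0 e1 d
  | Brdi : inBr d r0 r1 e0 e1 d^-1
  | Brr0 : inBr d r0 r1 e0 e1 r0
  | Brr1 : inBr d r0 r1 e0 e1 r1
  | Bre0 : inBr d r0 r1 e0 e1 e0
  | Bre1 : inBr d r0 r1 e0 e1 e1
  | Bropp x : inBr d r0 r1 e0 e1 x -> inBr d r0 r1 e0 e1 (- x)
  | Bradd x y : inBr d r0 r1 e0 e1 x -> inBr d r0 r1 e0 e1 y ->
                inBr d r0 r1 e0 e1 (x + y)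
  | Brmul x y : inBr d r0 r1 e0 e1 x -> inBr d r0 r1 e0 e1 y ->
                inBr d r0 r1 e0 e1 (x * y).

Inductive lspan (d : R) (s : seq R) : R -> Prop :=
  | lspan0 : lspan d s 0
  | lspanS y (n k : int) v : lspan d s y -> v \in s ->
                             lspan d s (y + n%:~R * d ^ k * v).

Definition BrG2_rels (d r0 r1 e0 e1 : R) : Prop :=
  (d \is a GRing.unit /\
   [/\ d * r0 = r0 * d, d * r1 = r1 * d, d * e0 = e0 * d & d * e1 = e1 * d]) /\
  (r0 * r0 = 1 /\ r1 * r1 = 1) /\
  [/\ r0 * e0 = e0, e0 * r0 = e0, r1 * e1 = e1 & e1 * r1 = e1] /\
  (e0 * e0 = d ^+ 3 * e0 /\ e1 * e1 = d * e1) /\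
  [/\ r0 * e1 * e0 = r1 * e0 & e0 * e1 * r0 = e0 * r1] /\
  [/\ e1 * r0 * e1 * r0 * e1 = e1 & e1 * r0 * e1 * r0 * r1 = e1 * r0 * r1 * r0] /\
  e0 * r1 * e0 = d ^+ 2 * e0 /\
  r1 * r0 * e1 * r0 * e1 = r0 * r1 * r0 * e1 /\
  (r1 * r0) ^+ 6 = 1.

End Ring.

(* Main.v *)
Require Import Defs.
From HB Require Import structures.
From mathcomp Require Import all_boot all_order all_algebra.
Import GRing.Theory.
Local Open Scope ring_scope.

Definition rule := (seq nat * seq nat)%type.
Definition step := (nat * nat * bool)%type.

Definition app_step (rs : seq rule) (w : seq nat) (st : step) : option (seq nat) :=
  let: (i, p, dir) := st in
  let: (l, r) := nth ([::], [::]) rs i in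
  let: (a, b) := if dir then (l, r) else (r, l) in
  if take (size a) (drop p w) == a then Some (take p w ++ b ++ drop (p + size a)%N w)
  else None.

Fixpoint run (rs : seq rule) (w : seq nat) (sts : seq step) : option (seq nat) :=
  match sts with
  | [::] => Some w
  | st :: sts' => if app_step rs w st is Some w' then run rs w' sts' else None
  end.

Fixpoint build (acc : seq rule) (cs : seq (rule * seq step)) : option (seq rule) :=
  match cs with
  | [::] => Some acc
  | (rl, sts) :: cs' =>
      if run acc rl.1 sts == Some rl.2 then build (rcons acc rl) cs' else None
  end.

Fixpoint rw_at (l r : seq nat) (w : seq nat) : option (seq nat) :=
  if take (size l) w == l then Some (r ++ drop (size l) w) else
  match w with [::] => None | a :: w' => omap (cons a) (rw_at l r w') end.

Fixpoint rw1 (rs : seq rule) (w : seq nat) : option (seq nat) :=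
  match rs with
  | [::] => None
  | (l, r) :: rs' => if rw_at l r w is Some w' then Some w' else rw1 rs' w
  end.

Fixpoint nfn (n : nat) (rs : seq rule) (w : seq nat) : seq nat :=
  match n with
  | 0 => w
  | n'.+1 => if rw1 rs w is Some w' then nfn n' rs w' else w
  end.
Definition base : seq rule := [:: ([:: 0; 4], [:: 4; 0]);
  ([:: 1; 4], [:: 4; 1]);
  ([:: 2; 4], [:: 4; 2]);
  ([:: 3; 4], [:: 4; 3]);
  ([:: 0; 0], [::]);
  ([:: 1; 1], [::]);
  ([:: 0; 2], [:: 2]);
  ([:: 2; 0], [:: 2]);
  ([:: 1; 3], [:: 3]);
  ([:: 3; 1], [:: 3]);
  ([:: 2; 2], [:: 4; 4; 4; 2]);
  ([:: 3; 3], [:: 4; 3]);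
  ([:: 0; 3; 2], [:: 1; 2]);
  ([:: 2; 3; 0], [:: 2; 1]);
  ([:: 3; 0; 3; 0; 3], [:: 3]);
  ([:: 3; 0; 3; 0; 1], [:: 3; 0; 1; 0]);
  ([:: 2; 1; 2], [:: 4; 4; 2]);
  ([:: 1; 0; 3; 0; 3], [:: 0; 1; 0; 3]);
  ([:: 1; 0; 1; 0; 1; 0; 1; 0; 1; 0; 1; 0], [::])].
Definition certs : seq (rule * seq step) := [:: (([:: 0; 1; 2], [:: 3; 2]), [:: (12, 1, false); (4, 0, true)]);
  (([:: 2; 3; 2], [:: 4; 4; 2]), [:: (7, 0, false); (12, 1, true); (16, 0, true)]);
  (([:: 2; 1; 0], [:: 2; 3]), [:: (13, 0, false); (4, 2, true)]);
  (([:: 1; 0; 1; 0; 3], [:: 0; 3; 0; 3]), [:: (17, 1, false); (5, 0, true)]);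
  (([:: 3; 0; 1; 0; 3], [:: 3]), [:: (17, 1, false); (9, 0, true); (14, 0, true)]);
  (([:: 3; 0; 1; 0; 1], [:: 3; 0; 3; 0]), [:: (15, 0, false); (5, 4, true)]);
  (([:: 0; 1; 0; 3; 0; 1; 0], [:: 1; 0; 3; 0; 1]), [:: (15, 3, false); (17, 0, false); (15, 4, true); (15, 2, true); (4, 5, true)]);
  (([:: 1; 0; 3; 0; 1; 0], [:: 0; 1; 0; 3; 0; 1]), [:: (15, 2, false); (17, 0, true)]);
  (([:: 0; 1; 0; 1; 0; 1; 0; 1; 0; 1; 0], [:: 1]), [:: (5, 0, false); (18, 1, true)]);
  (([:: 1; 0; 1; 0; 1; 0; 1; 0; 1; 0], [:: 0; 1]), [:: (4, 0, false); (27, 1, true)]);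
  (([:: 0; 1; 0; 1; 0; 1; 0; 1; 0], [:: 1; 0; 1]), [:: (5, 0, false); (28, 1, true)]);
  (([:: 1; 0; 1; 0; 1; 0; 1; 0], [:: 0; 1; 0; 1]), [:: (4, 0, false); (29, 1, true)]);
  (([:: 0; 1; 0; 1; 0; 1; 0], [:: 1; 0; 1; 0; 1]), [:: (5, 0, false); (30, 1, true)]);
  (([:: 1; 0; 1; 0; 1; 0], [:: 0; 1; 0; 1; 0; 1]), [:: (4, 0, false); (31, 1, true)])].
Definition allrules : seq rule := [:: ([:: 0; 4], [:: 4; 0]);
  ([:: 1; 4], [:: 4; 1]);
  ([:: 2; 4], [:: 4; 2]);
  ([:: 3; 4], [:: 4; 3]);
  ([:: 0; 0], [::]);
  ([:: 1; 1], [::]);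
  ([:: 0; 2], [:: 2]);
  ([:: 2; 0], [:: 2]);
  ([:: 1; 3], [:: 3]);
  ([:: 3; 1], [:: 3]);
  ([:: 2; 2], [:: 4; 4; 4; 2]);
  ([:: 3; 3], [:: 4; 3]);
  ([:: 0; 3; 2], [:: 1; 2]);
  ([:: 2; 3; 0], [:: 2; 1]);
  ([:: 3; 0; 3; 0; 3], [:: 3]);
  ([:: 3; 0; 3; 0; 1], [:: 3; 0; 1; 0]);
  ([:: 2; 1; 2], [:: 4; 4; 2]);
  ([:: 1; 0; 3; 0; 3], [:: 0; 1; 0; 3]);
  ([:: 1; 0; 1; 0; 1; 0; 1; 0; 1; 0; 1; 0], [::]);
  ([:: 0; 1; 2], [:: 3; 2]);
  ([:: 2; 3; 2], [:: 4; 4; 2]);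
  ([:: 2; 1; 0], [:: 2; 3]);
  ([:: 1; 0; 1; 0; 3], [:: 0; 3; 0; 3]);
  ([:: 3; 0; 1; 0; 3], [:: 3]);
  ([:: 3; 0; 1; 0; 1], [:: 3; 0; 3; 0]);
  ([:: 0; 1; 0; 3; 0; 1; 0], [:: 1; 0; 3; 0; 1]);
  ([:: 1; 0; 3; 0; 1; 0], [:: 0; 1; 0; 3; 0; 1]);
  ([:: 0; 1; 0; 1; 0; 1; 0; 1; 0; 1; 0], [:: 1]);
  ([:: 1; 0; 1; 0; 1; 0; 1; 0; 1; 0], [:: 0; 1]);
  ([:: 0; 1; 0; 1; 0; 1; 0; 1; 0], [:: 1; 0; 1]);
  ([:: 1; 0; 1; 0; 1; 0; 1; 0], [:: 0; 1; 0; 1]);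
  ([:: 0; 1; 0; 1; 0; 1; 0], [:: 1; 0; 1; 0; 1]);
  ([:: 1; 0; 1; 0; 1; 0], [:: 0; 1; 0; 1; 0; 1])].
Definition Cl : seq (seq nat) := [:: [::]; [:: 0]; [:: 1]; [:: 2]; [:: 3]; [:: 0; 1]; [:: 0; 3]; [:: 1; 0]; [:: 1; 2]; [:: 2; 1]; [:: 2; 3]; [:: 3; 0]; [:: 3; 2]; [:: 0; 1; 0]; [:: 0; 3; 0]; [:: 1; 0; 1]; [:: 1; 0; 3]; [:: 1; 2; 1]; [:: 1; 2; 3]; [:: 3; 0; 1]; [:: 3; 0; 3]; [:: 3; 2; 1]; [:: 3; 2; 3]; [:: 0; 1; 0; 1]; [:: 0; 1; 0; 3]; [:: 0; 3; 0; 1]; [:: 0; 3; 0; 3]; [:: 1; 0; 1; 0]; [:: 1; 0; 3; 0]; [:: 3; 0; 1; 0]; [:: 3; 0; 3; 0]; [:: 0; 1; 0; 1; 0]; [:: 0; 1; 0; 3; 0]; [:: 0; 3; 0; 1; 0]; [:: 0; 3; 0; 3; 0]; [:: 1; 0; 1; 0; 1]; [:: 1; 0; 3; 0; 1]; [:: 0; 1; 0; 1; 0; 1]; [:: 0; 1; 0; 3; 0; 1]].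
Definition CW : seq word := [:: [::]; [:: false]; [:: true]; [:: false; true]; [:: true; false]; [:: false; true; false]; [:: true; false; true]; [:: false; true; false; true]; [:: true; false; true; false]; [:: false; true; false; true; false]; [:: true; false; true; false; true]; [:: false; true; false; true; false; true]].
Definition declist : seq (seq nat * (word * bool * word)) := [:: ([:: 2], ([::], false, [::]));
  ([:: 3], ([::], true, [::]));
  ([:: 0; 3], ([:: false], true, [::]));
  ([:: 1; 2], ([:: true], false, [::]));
  ([:: 2; 1], ([::], false, [:: true]));
  ([:: 2; 3], ([::], false, [:: true; false]));
  ([:: 3; 0], ([::], true, [:: false]));
  ([:: 3; 2], ([:: false; true], false, [::]));
  ([:: 0; 3; 0], ([:: false], true, [:: false]));
  ([:: 1; 0; 3], ([:: true; false], true, [::]));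
  ([:: 1; 2; 1], ([:: true], false, [:: true]));
  ([:: 1; 2; 3], ([:: true], false, [:: true; false]));
  ([:: 3; 0; 1], ([::], true, [:: false; true]));
  ([:: 3; 0; 3], ([::], true, [:: false; true; false; true; false]));
  ([:: 3; 2; 1], ([:: false; true], false, [:: true]));
  ([:: 3; 2; 3], ([:: false; true], false, [:: true; false]));
  ([:: 0; 1; 0; 3], ([:: true; false], true, [:: false; true; false; true; false]));
  ([:: 0; 3; 0; 1], ([:: false], true, [:: false; true]));
  ([:: 0; 3; 0; 3], ([:: false], true, [:: false; true; false; true; false]));
  ([:: 1; 0; 3; 0], ([:: true; false], true, [:: false]));
  ([:: 3; 0; 1; 0], ([::], true, [:: false; true; false]));
  ([:: 3; 0; 3; 0], ([::], true, [:: false; true; false; true]));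
  ([:: 0; 1; 0; 3; 0], ([:: true; false], true, [:: false; true; false; true]));
  ([:: 0; 3; 0; 1; 0], ([:: false], true, [:: false; true; false]));
  ([:: 0; 3; 0; 3; 0], ([:: false], true, [:: false; true; false; true]));
  ([:: 1; 0; 3; 0; 1], ([:: true; false], true, [:: false; true]));
  ([:: 0; 1; 0; 3; 0; 1], ([:: true; false], true, [:: false; true; false]))].

Definition nf (w : seq nat) := nfn 200 allrules w.

Lemma build_eq : build base certs = Some allrules.
Proof. vm_compute. reflexivity. Qed.

Definition toL (w : word) : seq nat := map (fun b : bool => if b then 1%N else 0%N) w.
Definition tob (c : seq nat) : word := map (fun a => a == 1%N) c.
Definition Eseq (i : bool) : nat := if i then 3%N else 2%N.

Definition dcount (w : seq nat) := find (fun a => a != 4%N) w.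

Definition closure_ok :=
  all (fun c => all (fun c' => let w := nf (c ++ c') in
     (take (dcount w) w == nseq (dcount w) 4%N) && (drop (dcount w) w \in Cl)) Cl) Cl.

Lemma closure_okT : closure_ok. Proof. vm_compute. reflexivity. Qed.

Definition tab (b : bool) (c : word) : word := tob (nf (toL (b :: c))).

Definition tab_ok :=
  all (fun b => all (fun c => (toL (tab b c) == nf (toL (b :: c))) && (tab b c \in CW)
     && (wact (b :: c) (beta false) == wact (tab b c) (beta false))
     && (wact (b :: c) (beta true) == wact (tab b c) (beta true))) CW) [:: false; true].

Lemma tab_okT : tab_ok. Proof. vm_compute. reflexivity. Qed.

Definition inNb (i : bool) (c : word) :=
  (wact c (beta i) == beta i) || (wact c (beta i) == wopp (beta i)).

Definition Kset (i : bool) : seq word := if i then [:: [::]; kgen] else [:: [::]].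

Definition left_ok :=
  all (fun i => all (fun c => inNb i c ==> has (fun k =>
     nf (toL c ++ [:: Eseq i]) == nf (Eseq i :: toL k)) (Kset i)) CW) [:: false; true].
Definition right_ok :=
  all (fun i => all (fun c => inNb i c ==> has (fun k =>
     nf (Eseq i :: toL c) == nf (Eseq i :: toL k)) (Kset i)) CW) [:: false; true].
Lemma left_okT : left_ok. Proof. vm_compute. reflexivity. Qed.
Lemma right_okT : right_ok. Proof. vm_compute. reflexivity. Qed.

Definition dec (c : seq nat) : option (word * bool * word) :=
  if [seq p <- declist | p.1 == c] is p :: _ then Some p.2 else None.

Definition C_ok :=
  all (fun c => (toL (tob c) == c) ||
     (if dec c is Some (x, i, y) then nf c == nf (toL x ++ Eseq i :: toL y) else false)) Cl.
Lemma C_okT : C_ok. Proof. vm_compute. reflexivity. Qed.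

Fixpoint red (a : word) : word :=
  match a with [::] => [::] | b :: a' => tab b (red a') end.

Lemma sref_invol b v : sref b (sref b v) = v.
Proof.
case: b; case: v => a c; rewrite /sref /=; congr pair.
- by rewrite opprB addrC subrK.
- by rewrite opprD opprK addrNK.
Qed.

Lemma sref_opp b v : sref b (wopp v) = wopp (sref b v).
Proof. by case: b; case: v => a c; rewrite /sref /wopp /=; congr pair; rewrite ?opprB ?opprD ?mulrN // opprK addrC. Qed.

Lemma wact_opp a v : wact a (wopp v) = wopp (wact a v).
Proof. by elim: a => [|b a IH] //=; rewrite IH sref_opp. Qed.

Lemma wact_rev a v : wact (rev a) (wact a v) = v.
Proof.
elim: a v => [|b a IH] v //=.
by rewrite rev_cons /wact foldr_rcons -/(wact _ _) sref_invol IH.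
Qed.

Lemma wopp_invol v : wopp (wopp v) = v.
Proof. by case: v => a c; rewrite /wopp /= !opprK. Qed.

Lemma inN_rev i a : inN i a -> inN i (rev a).
Proof.
rewrite /inN; case=> H; [left | right]; have := wact_rev a (beta i); rewrite H //.
by rewrite wact_opp => /(congr1 wopp); rewrite wopp_invol.
Qed.

Section Alg.
Variables (R : unitRingType) (d r0 r1 e0 e1 : R).

Definition gl (a : nat) : R :=
  match a with 0 => r0 | 1 => r1 | 2 => e0 | 3 => e1 | _ => d end.
Definition ev (w : seq nat) : R := foldr (fun a x => gl a * x) 1 w.

Lemma ev_cat u v : ev (u ++ v) = ev u * ev v.
Proof. by elim: u => [|a u IH] /=; rewrite ?mul1r // IH mulrA. Qed.

Definition holds (rl : rule) := ev rl.1 = ev rl.2.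
Definition allholds (rs : seq rule) := forall rl, rl \in rs -> holds rl.

Lemma splice_ok a b w p : ev a = ev b -> take (size a) (drop p w) = a ->
  ev w = ev (take p w ++ b ++ drop (p + size a)%N w).
Proof.
move=> Hab Ht.
rewrite -{1}(cat_take_drop p w) -{1}(cat_take_drop (size a) (drop p w)) Ht drop_drop.
by rewrite !ev_cat Hab addnC.
Qed.

Lemma app_step_ok rs w st w' : allholds rs -> app_step rs w st = Some w' -> ev w = ev w'.
Proof.
move=> H; case: st => [[i p] dir] /=.
have Hn : holds (nth ([::], [::]) rs i).
  case: (ltnP i (size rs)) => Hi; first by apply: H; rewrite mem_nth.
  by rewrite nth_default.
case: (nth _ rs i) Hn => l r; rewrite /holds /= => Hn.
by case: dir; case: ifP => // /eqP Ht [<-]; apply: splice_ok => //; rewrite Hn.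
Qed.

Lemma run_ok rs sts w w' : allholds rs -> run rs w sts = Some w' -> ev w = ev w'.
Proof.
move=> H; elim: sts w => [|st sts IH] w /=; first by case=> ->.
case E: (app_step rs w st) => [w1|] // /IH <-.
exact: app_step_ok E.
Qed.

Lemma build_ok cs acc rs : allholds acc -> build acc cs = Some rs -> allholds rs.
Proof.
elim: cs acc => [|[rl sts] cs IH] acc Hacc /=; first by case=> <-.
case: ifP => // /eqP Hr; apply: IH => x.
rewrite mem_rcons inE => /orP [/eqP -> | /Hacc //].
exact: (@run_ok acc sts _ _ Hacc Hr).
Qed.

Lemma pre_ok l r w : ev l = ev r -> take (size l) w = l -> ev w = ev (r ++ drop (size l) w).
Proof. by move=> Hlr Ht; rewrite -{1}(cat_take_drop (size l) w) Ht !ev_cat Hlr. Qed.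

Lemma rw_at_unfold l r w : rw_at l r w = if take (size l) w == l then Some (r ++ drop (size l) w) else
  match w with [::] => None | a :: w' => omap (cons a) (rw_at l r w') end.
Proof. by case: w. Qed.

Lemma rw_at_ok l r w w' : ev l = ev r -> rw_at l r w = Some w' -> ev w = ev w'.
Proof.
move=> Hlr; elim: w w' => [|a w IH] w'; rewrite rw_at_unfold.
  by case: ifP => // /eqP Ht [<-]; exact: (@pre_ok l r [::] Hlr Ht).
case: ifP => [/eqP Ht [<-] | _]; first exact: (@pre_ok l r _ Hlr Ht).
case E: (rw_at l r w) => [w1|] //= [<-] /=.
by rewrite (IH _ E).
Qed.

Lemma rw1_ok rs w w' : allholds rs -> rw1 rs w = Some w' -> ev w = ev w'.
Proof.
elim: rs => [|[l r] rs IH] H //=.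
case E: (rw_at l r w) => [w1|].
  move=> [<-]; apply: rw_at_ok E; apply: (H (l, r)); exact: mem_head.
apply: IH => x Hx; apply: H; by rewrite inE Hx orbT.
Qed.

Lemma nfn_ok n rs w : allholds rs -> ev (nfn n rs w) = ev w.
Proof.
move=> H; elim: n w => [|n IH] w //=.
case E: (rw1 rs w) => [w1|] //; by rewrite IH (@rw1_ok rs w w1 H E).
Qed.

Hypothesis Hrels : BrG2_rels d r0 r1 e0 e1.

Lemma base_ok : allholds base.
Proof.
case: Hrels => [[Hu [Hd0 Hd1 Hd2 Hd3]] [[H00 H11] [[Ha Hb Hc Hd] [[He0 He1] [[Hf Hg] [[Hh Hi] [Hj [Hk Hl]]]]]]]].
move=> rl; rewrite /base !inE.
repeat (case/orP; [move=> /eqP ->; rewrite /holds /= ?mulr1 ?mulrA; try done |]).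
all: try (move=> /eqP ->; rewrite /holds /= ?mulr1 ?mulrA; try done).
- by rewrite He0 !exprS expr0 mulr1 !mulrA.
- by move: Hl; rewrite !exprS expr0 mulr1 !mulrA.
Qed.



Lemma rules_ok : allholds allrules.
Proof. exact: (@build_ok certs base allrules base_ok build_eq). Qed.

Lemma nf_ok w : ev (nf w) = ev w.
Proof. exact: (@nfn_ok 200 allrules w rules_ok). Qed.

Lemma nf_eq a b : nf a = nf b -> ev a = ev b.
Proof. by move=> H; rewrite -(nf_ok a) -(nf_ok b) H. Qed.

Lemma d_unit : d \is a GRing.unit.
Proof. by case: Hrels => [[]]. Qed.

Lemma comm_gl a : gl a * d = d * gl a.
Proof.
case: Hrels => [[_ [H0 H1 H2 H3]] _].
by case: a => [|[|[|[|a]]]] /=.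
Qed.

Lemma comm_d_ev c : ev c * d = d * ev c.
Proof.
elim: c => [|a c IH] /=; first by rewrite mul1r mulr1.
by rewrite -mulrA IH mulrA comm_gl -mulrA.
Qed.

Lemma comm_dz_ev c k : ev c * d ^ k = d ^ k * ev c.
Proof. by apply: commrXz; exact: comm_d_ev. Qed.

Lemma ev_nseqD n : ev (nseq n 4%N) = d ^+ n.
Proof. by elim: n => [|n IH] /=; rewrite ?expr0 // IH exprS. Qed.

Lemma closure c c' : c \in Cl -> c' \in Cl ->
  exists n c'', c'' \in Cl /\ ev (c ++ c') = d ^+ n * ev c''.
Proof.
move=> Hc Hc'.
have := closure_okT; rewrite /closure_ok => /allP /(_ c Hc) /allP /(_ c' Hc').
set w := nf (c ++ c'); set k := dcount w.
case/andP => /eqP Ht Hd.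
exists k, (drop k w); split => //.
by rewrite -(nf_ok (c ++ c')) -/w -{1}(cat_take_drop k w) ev_cat Ht ev_nseqD.
Qed.

Lemma mprod c c' k m : c \in Cl -> c' \in Cl ->
  exists j c'', c'' \in Cl /\ d ^ k * ev c * (d ^ m * ev c') = d ^ j * ev c''.
Proof.
move=> Hc Hc'; case: (closure c c' Hc Hc') => n [c'' [Hc'' He]].
exists (k + m + n%:Z), c''; split => //.
rewrite !exprzDr ?d_unit //.
rewrite mulrA -(mulrA _ (ev c)) comm_dz_ev mulrA -!mulrA -ev_cat He.
by rewrite !mulrA.
Qed.

Lemma monoid_nf x : inBrM d r0 r1 e0 e1 x -> exists k c, c \in Cl /\ x = d ^ k * ev c.
Proof.
elim=> [| | | | | | | y z _ [k [c [Hc ->]]] _ [m [c' [Hc' ->]]]].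
- by exists 0, [::]; rewrite expr0z mul1r.
- by exists 1, [::]; rewrite expr1z /= mulr1.
- by exists (-1), [::]; rewrite -invr_expz expr1z /= mulr1.
- by exists 0, [:: 0%N]; rewrite expr0z mul1r /= mulr1.
- by exists 0, [:: 1%N]; rewrite expr0z mul1r /= mulr1.
- by exists 0, [:: 2%N]; rewrite expr0z mul1r /= mulr1.
- by exists 0, [:: 3%N]; rewrite expr0z mul1r /= mulr1.
- exact: mprod.
Qed.

Definition gw (b : bool) := if b then r1 else r0.

Lemma wimg_cons b u : wimg r0 r1 (b :: u) = gw b * wimg r0 r1 u.
Proof. by rewrite /wimg big_cons. Qed.

Lemma wimg_cat u v : wimg r0 r1 (u ++ v) = wimg r0 r1 u * wimg r0 r1 v.
Proof. by rewrite /wimg big_cat. Qed.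

Lemma wimg_nil : wimg r0 r1 [::] = 1.
Proof. by rewrite /wimg big_nil. Qed.

Lemma wimg_ev w : wimg r0 r1 w = ev (toL w).
Proof. by elim: w => [|b w IH]; rewrite ?wimg_nil // wimg_cons IH; case: b. Qed.

Lemma gsq b : gw b * gw b = 1.
Proof. by case: Hrels => [_ [[H0 H1] _]]; case: b. Qed.

Lemma wimg_revK u : wimg r0 r1 u * wimg r0 r1 (rev u) = 1.
Proof.
elim: u => [|b u IH]; first by rewrite wimg_nil mulr1.
rewrite rev_cons -cats1 wimg_cat wimg_cons (wimg_cons b) wimg_nil mulr1.
by rewrite mulrA -(mulrA (gw b)) IH mulr1 gsq.
Qed.

Lemma wimg_revK' u : wimg r0 r1 (rev u) * wimg r0 r1 u = 1.
Proof. by have := wimg_revK (rev u); rewrite revK. Qed.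

Lemma red_ok a : [/\ red a \in CW, wimg r0 r1 a = wimg r0 r1 (red a)
  & forall j, wact a (beta j) = wact (red a) (beta j)].
Proof.
elim: a => [|b a [Hc Hw Ha]]; first by split.
have Hb : b \in [:: false; true] by case: b.
have := tab_okT; rewrite /tab_ok => /allP /(_ b Hb).
move/allP/(_ _ Hc) => /andP [/andP [/andP [/eqP Ht Hin] /eqP Hf] /eqP Htr].
change (red (b :: a)) with (tab b (red a)); split => //.
- by rewrite wimg_cons Hw -wimg_cons !wimg_ev Ht nf_ok.
- move=> j; rewrite [wact (b :: a) _]/= Ha; case: j; [exact: Htr | exact: Hf].
Qed.

Lemma inN_red i n : inN i n -> inNb i (red n).
Proof.
case: (red_ok n) => _ _ Ha; rewrite /inNb /inN -Ha.
by case => ->; rewrite eqxx ?orbT.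
Qed.

Lemma left_tab i n : inN i n ->
  exists2 k, k \in Kset i & wimg r0 r1 n * gl (Eseq i) = gl (Eseq i) * wimg r0 r1 k.
Proof.
have Hi : i \in [:: false; true] by case: i.
move=> /inN_red Hn; case: (red_ok n) => Hc Hw _.
have := left_okT => /allP /(_ i Hi) /allP /(_ _ Hc).
rewrite Hn /= => /hasP [k Hk /eqP He].
exists k => //; rewrite Hw !wimg_ev.
by have := nf_eq _ _ He; rewrite ev_cat /= mulr1.
Qed.

Lemma right_tab i n : inN i n ->
  exists2 k, k \in Kset i & gl (Eseq i) * wimg r0 r1 n = gl (Eseq i) * wimg r0 r1 k.
Proof.
have Hi : i \in [:: false; true] by case: i.
move=> /inN_red Hn; case: (red_ok n) => Hc Hw _.
have := right_okT => /allP /(_ i Hi) /allP /(_ _ Hc).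
rewrite Hn /= => /hasP [k Hk /eqP He].
exists k => //; rewrite Hw !wimg_ev.
by have := nf_eq _ _ He.
Qed.

Lemma Kset_inK i k : k \in Kset i -> inK i k.
Proof.
case: i; rewrite /Kset !inE /=.
- case/orP => /eqP ->; [exists 0%N | exists 1%N]; by split.
- by move/eqP => ->; split.
Qed.

Lemma dform i Di (HD : left_coset_reps i Di) x y :
  exists u v w, [/\ u \in Di, inK i v, rev w \in Di &
    wimg r0 r1 x * gl (Eseq i) * wimg r0 r1 y =
    wimg r0 r1 u * gl (Eseq i) * wimg r0 r1 v * wimg r0 r1 w].
Proof.
case: HD => Hcov _.
case: (Hcov x) => u Hu HN.
case: (left_tab i _ HN) => k Hk Hl.
case: (Hcov (rev (k ++ y))) => w' Hw' HN2.
have HN2' : inN i ((k ++ y) ++ w').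
  by have := inN_rev _ _ HN2; rewrite -rev_cat revK.
case: (right_tab _ _ HN2') => k2 Hk2 Hr.
exists u, k2, (rev w'); split => //; first exact: Kset_inK.
  by rewrite revK.
have Hx : wimg r0 r1 x = wimg r0 r1 u * wimg r0 r1 (rev u ++ x)
  by rewrite wimg_cat mulrA wimg_revK mul1r.
have Hz : wimg r0 r1 (k ++ y) = wimg r0 r1 ((k ++ y) ++ w') * wimg r0 r1 (rev w')
  by rewrite (wimg_cat _ w') -mulrA wimg_revK mulr1.
rewrite Hx -(mulrA (wimg r0 r1 u)) Hl mulrA -(mulrA _ (wimg r0 r1 k)) -wimg_cat Hz.
by rewrite mulrA -(mulrA (wimg r0 r1 u)) Hr !mulrA.
Qed.

Definition SS := map ev Cl.

Lemma lspan_add x y : lspan d SS x -> lspan d SS y -> lspan d SS (x + y).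
Proof.
move=> Hx; elim=> [|y0 n k v _ IH Hv]; first by rewrite addr0.
by rewrite addrA; apply: lspanS.
Qed.

Lemma lspan_opp x : lspan d SS x -> lspan d SS (- x).
Proof.
elim=> [|y0 n k v _ IH Hv]; first by rewrite oppr0; constructor.
rewrite opprD.
have -> : - (n%:~R * d ^ k * v) = (- n)%:~R * d ^ k * v by rewrite intrN !mulNr.
exact: lspanS.
Qed.

Lemma lspan_term n k c : c \in Cl -> lspan d SS (n%:~R * d ^ k * ev c).
Proof.
move=> Hc.
have := @lspanS R d SS 0 n k (ev c) (@lspan0 R d SS) (map_f ev Hc).
by rewrite add0r.
Qed.

Lemma term_mul n k c m j c' : c \in Cl -> c' \in Cl ->
  exists p q c'', c'' \in Cl /\
   (n%:~R * d ^ k * ev c) * (m%:~R * d ^ j * ev c') = p%:~R * d ^ q * ev c''.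
Proof.
move=> Hc Hc'; case: (mprod c c' k j Hc Hc') => q [c'' [Hc'' He]].
exists (m * n), q, c''; split => //.
by rewrite !mulrzl !mulrzAl !mulrzAr mulrzA He.
Qed.

Lemma lspan_mul_term n k c y : c \in Cl -> lspan d SS y ->
  lspan d SS ((n%:~R * d ^ k * ev c) * y).
Proof.
move=> Hc; elim=> [|y0 m j v _ IH Hv]; first by rewrite mulr0; constructor.
rewrite mulrDr; apply: lspan_add => //.
case/mapP: Hv => c' Hc' ->.
case: (term_mul n k c m j c' Hc Hc') => p [q [c'' [Hc'' ->]]].
exact: lspan_term.
Qed.

Lemma lspan_mul x y : lspan d SS x -> lspan d SS y -> lspan d SS (x * y).
Proof.
elim=> [|x0 n k v _ IH Hv] Hy; first by rewrite mul0r; constructor.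
rewrite mulrDl; apply: lspan_add; first exact: IH.
case/mapP: Hv => c Hc ->; exact: lspan_mul_term.
Qed.

Lemma monoid_span x : inBrM d r0 r1 e0 e1 x -> lspan d SS x.
Proof.
move=> /monoid_nf [k [c [Hc ->]]].
have := lspan_term 1 k c Hc; by rewrite mul1r.
Qed.

Lemma Br_span x : inBr d r0 r1 e0 e1 x -> lspan d SS x.
Proof.
elim.
- by apply: monoid_span; apply: BrM1.
- by apply: monoid_span; apply: BrMd.
- by apply: monoid_span; apply: BrMdi.
- by apply: monoid_span; apply: BrMr0.
- by apply: monoid_span; apply: BrMr1.
- by apply: monoid_span; apply: BrMe0.
- by apply: monoid_span; apply: BrMe1.
- move=> y _ Hy; exact: lspan_opp.
- move=> y z _ Hy _ Hz; exact: lspan_add.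
- move=> y z _ Hy _ Hz; exact: lspan_mul.
Qed.

End Alg.

Theorem lemma9p7 (R : unitRingType) (d r0 r1 e0 e1 : R)
    (Hrels : BrG2_rels d r0 r1 e0 e1)
    (D0 D1 : seq word)
    (HD0 : left_coset_reps false D0) (HD1 : left_coset_reps true D1) :
  let D := fun i : bool => if i then D1 else D0 in
  let E := fun i : bool => if i then e1 else e0 in
  (forall x, inBrM d r0 r1 e0 e1 x ->
     (exists (i : bool) (k : int) (u v w : word),
        [/\ u \in D i, inK i v, rev w \in D i &
            x = d ^ k * wimg r0 r1 u * E i * wimg r0 r1 v * wimg r0 r1 w])
     \/ (exists (k : int) (a : word), x = d ^ k * wimg r0 r1 a))
  /\ (exists s : seq R, size s = 39%N /\
        forall x, inBr d r0 r1 e0 e1 x -> lspan d s x).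
Proof.
move=> D E; split.
- move=> x Hx.
  case: (monoid_nf R d r0 r1 e0 e1 Hrels x Hx) => k [c [Hc ->]].
  have := C_okT => /allP /(_ c Hc) /orP [/eqP Hp | ].
  + right; exists k, (tob c); by rewrite (wimg_ev R d r0 r1 e0 e1) Hp.
  + case: (dec c) => [[[x' i] y']|] // /eqP Hn.
    left; exists i, k.
    have HD : forall j, left_coset_reps j (D j) by case.
    case: (dform R d r0 r1 e0 e1 Hrels i (D i) (HD i) x' y') => u [v [w [Hu Hv Hw He]]].
    exists u, v, w; split => //.
    have -> : ev R d r0 r1 e0 e1 c =
      wimg r0 r1 x' * gl R d r0 r1 e0 e1 (Eseq i) * wimg r0 r1 y'.
      by rewrite (nf_eq R d r0 r1 e0 e1 Hrels _ _ Hn) ev_cat /= !(wimg_ev R d r0 r1 e0 e1) mulrA.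
    have HE : forall j, E j = gl R d r0 r1 e0 e1 (Eseq j) by case.
    rewrite HE.
    by rewrite He !mulrA.
- exists (SS R d r0 r1 e0 e1); split; first by rewrite size_map.
  exact: Br_span.
Qed.
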